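(* Let $\bar n\ge 1$ be an integer and let $\theta_2>0$ satisfy $\theta_2\neq k\pi/\sqrt{n}$ for all $n\in\{1,\dots,4\bar n+3\}$ and all $k\in\mathbb{N}$. Let $\Phi$ be the Kraus map $\Phi(\rho)=M_g\rho M_g^\dagger+M_e\rho M_e^\dagger+M_m\rho M_m^\dagger$ with $M_g,M_e,M_m$ as defined in the context. Then the finite-dimensional subspace $\mathcal{H}_0^{4\bar n+3}$ is invariant under $M_g,M_e,M_m$, and for every density operator $\rho_0$ (positive semidefinite, unit trace) with support in $\mathcal{H}_0^{4\bar n+3}$, the sequence $\rho_{k+1}=\Phi(\rho_k)$ converges to $|\bar n\rangle\langle\bar n|$. Moreover, $V(\rho)=\mathrm{trace}(f(\mathbf{N})\rho)$, with $f$ defined in the context, is a strict Lyapunov function on density operators supported in $\mathcal{H}_0^{4\bar n+3}$: $V(\Phi(\rho))<V(\rho)$ for every such $\rho\neq|\bar n\rangle\langle\bar n|$.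
   Context: Let $\mathcal{H}$ be the Hilbert space with orthonormal (Fock) basis $\{|n\rangle\}_{n\in\mathbb{N}}$ ($\mathbb{N}$ includes $0$). Let $\mathbf{a}=\sum_{n\ge1}\sqrt{n}\,|n-1\rangle\langle n|$ (annihilation operator), $\mathbf{a}^\dagger$ its adjoint, $\mathbf{N}=\mathbf{a}^\dagger\mathbf{a}=\sum_n n|n\rangle\langle n|$, $\mathbf{I}$ the identity, and for a function $h:\mathbb{N}\to\mathbb{C}$ write $h(\mathbf{N})=\sum_n h(n)|n\rangle\langle n|$. Let $\mathcal{H}_{n_1}^{n_2}=\mathrm{span}\{|n_1\rangle,\dots,|n_2\rangle\}$. Fix $\theta_1=\pi/\sqrt{\bar n+1}$, a parameter $\theta_2>0$ and an arbitrary real phase $\varphi$. Define $M_g=\mathbf{a}^\dagger\,\big(1+\cos\tfrac{\theta_2\sqrt{\mathbf{N}}}{2}\big)\,\frac{\sin(\theta_1\sqrt{\mathbf{N}+\mathbf{I}})}{2\sqrt{\mathbf{N}+\mathbf{I}}}$, $M_e=\cos^2\tfrac{\theta_1\sqrt{\mathbf{N}+\mathbf{I}}}{2}\,\cos\tfrac{\theta_2\sqrt{\mathbf{N}}}{2}-\sin^2\tfrac{\theta_1\sqrt{\mathbf{N}+\mathbf{I}}}{2}$, $M_m=e^{i\varphi}\,\mathbf{a}\,\frac{\sin(\theta_2\sqrt{\mathbf{N}}/2)}{\sqrt{\mathbf{N}}}\,\cos\tfrac{\theta_1\sqrt{\mathbf{N}+\mathbf{I}}}{2}$ (the value of $\sin(\theta_2\sqrt{n}/2)/\sqrt{n}$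 at $n=0$ is irrelevant since it is followed by $\mathbf{a}$). Set $\alpha_n=\pi\sqrt{(n+1)/(\bar n+1)}$ and $\beta_n=\theta_2\sqrt{n}/2$. Fix $\eta\in(0,1)$ and define $f:\mathbb{N}\to\mathbb{R}$ by $f(\bar n)=0$, $f(\bar n+1)=f(\bar n-1)=1$, $f(n-1)=f(n)+\eta\sin^2\tfrac{\alpha_n}{2}\cos^2\tfrac{\beta_n}{2}\,(f(n)-f(n+1))$ for $0<n<\bar n$ (recursively downward), $f(n+1)=f(n)+\eta\sin^2\tfrac{\beta_n}{2}\,(f(n)-f(n-1))$ for $\bar n<n<4\bar n+3$, and $f(n)=f(4\bar n+3)$ for $n>4\bar n+3$. *)

(* Defs.v *)
From Stdlib Require Import Reals Lra Lia.
Open Scope R_scope.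

Record C := mkC { Re : R ; Im : R }.
Definition RtoC (x : R) : C := mkC x 0.
Definition C0 : C := RtoC 0.
Definition C1 : C := RtoC 1.
Definition Cadd (z w : C) : C := mkC (Re z + Re w) (Im z + Im w).
Definition Cmul (z w : C) : C :=
  mkC (Re z * Re w - Im z * Im w) (Re z * Im w + Im z * Re w).
Definition Cconj (z : C) : C := mkC (Re z) (- Im z).
Definition Cexpi (phi : R) : C := mkC (cos phi) (sin phi).

Fixpoint Csum (n : nat) (F : nat -> C) : C :=
  match n with
  | O => C0
  | S k => Cadd (Csum k F) (F k)
  end.

(** Operators on the Fock space, given by their matrix elements
    op m n = <m| A |n>. *)
Definition op := nat -> nat -> C.

(** annihilation operator a = sum_{n>=1} sqrt n |n-1><n| *)
Definition ann : op := fun m n =>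
  if Nat.eqb n (S m) then RtoC (sqrt (INR n)) else C0.
(** creation operator a^dagger = sum_n sqrt(n+1) |n+1><n| *)
Definition cre : op := fun m n =>
  if Nat.eqb m (S n) then RtoC (sqrt (INR m)) else C0.
Definition fN (h : nat -> C) : op := fun m n =>
  if Nat.eqb m n then h n else C0.
(** A * h(N)  (right multiplication by a diagonal operator: no infinite sum) *)
Definition mul_fN (A : op) (h : nat -> C) : op := fun m n => Cmul (A m n) (h n).
Definition scale_op (c : C) (A : op) : op := fun m n => Cmul c (A m n).

Definition theta1 (nbar : nat) : R := PI / sqrt (INR nbar + 1).

(** M_g = a^dag (1 + cos(theta2 sqrt N / 2)) sin(theta1 sqrt(N+I)) / (2 sqrt(N+I)) *)
Definition Mg (nbar : nat) (theta2 : R) : op :=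
  mul_fN cre (fun n => RtoC
    ((1 + cos (theta2 * sqrt (INR n) / 2))
     * (sin (theta1 nbar * sqrt (INR n + 1)) / (2 * sqrt (INR n + 1))))).

Definition Me (nbar : nat) (theta2 : R) : op :=
  fN (fun n => RtoC
    (cos (theta1 nbar * sqrt (INR n + 1) / 2) ^ 2 * cos (theta2 * sqrt (INR n) / 2)
     - sin (theta1 nbar * sqrt (INR n + 1) / 2) ^ 2)).

(** M_m = e^{i phi} a sin(theta2 sqrt N / 2)/sqrt N  cos(theta1 sqrt(N+I)/2) *)
Definition Mm (nbar : nat) (theta2 phi : R) : op :=
  scale_op (Cexpi phi)
    (mul_fN ann (fun n => RtoC
       ((sin (theta2 * sqrt (INR n) / 2) / sqrt (INR n))
        * cos (theta1 nbar * sqrt (INR n + 1) / 2)))).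

(** Dimension of H_0^{4 nbar + 3}. *)
Definition dimD (nbar : nat) : nat := 4 * nbar + 4.

(** The subspace H_0^{d-1} = span{|0>,...,|d-1>} is invariant under A. *)
Definition invariant_sub (d : nat) (A : op) : Prop :=
  forall m n, (n < d)%nat -> (d <= m)%nat -> A m n = C0.

Definition supported (d : nat) (rho : op) : Prop :=
  forall i j, (d <= i)%nat \/ (d <= j)%nat -> rho i j = C0.

Definition density (d : nat) (rho : op) : Prop :=
  supported d rho /\
  (forall i j, rho i j = Cconj (rho j i)) /\
  (forall v : nat -> C,
     0 <= Re (Csum d (fun i => Csum d (fun j =>
                 Cmul (Cmul (Cconj (v i)) (rho i j)) (v j))))) /\
  Csum d (fun i => rho i i) = C1.

(** A rho A^dagger, for rho supported in H_0^{d-1} (the sums over k, l < d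
    are then exactly the full matrix products). *)
Definition sandwich (d : nat) (A rho : op) : op := fun i j =>
  Csum d (fun k => Csum d (fun l =>
    Cmul (Cmul (A i k) (rho k l)) (Cconj (A j l)))).

Definition op_add (A B : op) : op := fun i j => Cadd (A i j) (B i j).

Definition Phi (nbar : nat) (theta2 phi : R) (rho : op) : op :=
  let d := dimD nbar in
  op_add (op_add (sandwich d (Mg nbar theta2) rho) (sandwich d (Me nbar theta2) rho))
         (sandwich d (Mm nbar theta2 phi) rho).

Definition proj (nbar : nat) : op := fun i j =>
  if andb (Nat.eqb i nbar) (Nat.eqb j nbar) then C1 else C0.

Definition Vf (d : nat) (f : nat -> R) (rho : op) : R :=
  Re (Csum d (fun n => Cmul (RtoC (f n)) (rho n n))).

Definition alpha (nbar n : nat) : R := PI * sqrt ((INR n + 1) / (INR nbar + 1)).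
Definition beta (theta2 : R) (n : nat) : R := theta2 * sqrt (INR n) / 2.

(** The defining equations of f (they determine f uniquely). *)
Definition f_spec (nbar : nat) (theta2 eta : R) (f : nat -> R) : Prop :=
  f nbar = 0 /\ f (S nbar) = 1 /\ f (Nat.pred nbar) = 1 /\
  (forall n, (0 < n < nbar)%nat ->
     f (Nat.pred n) = f n + eta * sin (alpha nbar n / 2) ^ 2
                               * cos (beta theta2 n / 2) ^ 2 * (f n - f (S n))) /\
  (forall n, (nbar < n < 4 * nbar + 3)%nat ->
     f (S n) = f n + eta * sin (beta theta2 n / 2) ^ 2 * (f n - f (Nat.pred n))) /\
  (forall n, (4 * nbar + 3 < n)%nat -> f n = f (4 * nbar + 3)%nat).

(* Main.v *)
Require Import Defs.
From Stdlib Require Import Reals Lra Lia Psatz ZArith FunctionalExtensionality.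
Open Scope R_scope.

Lemma Cext (z w : Defs.C) : Re z = Re w -> Im z = Im w -> z = w.
Proof. destruct z, w; simpl; intros; subst; reflexivity. Qed.

Fixpoint rsum (n : nat) (g : nat -> R) : R :=
  match n with O => 0 | S k => rsum k g + g k end.

Lemma Re_Csum n F : Re (Csum n F) = rsum n (fun k => Re (F k)).
Proof. induction n; simpl; [reflexivity| rewrite IHn; reflexivity]. Qed.
Lemma Im_Csum n F : Im (Csum n F) = rsum n (fun k => Im (F k)).
Proof. induction n; simpl; [reflexivity| rewrite IHn; reflexivity]. Qed.

Lemma rsum_ext n g h : (forall k, (k < n)%nat -> g k = h k) -> rsum n g = rsum n h.
Proof. induction n; intros H; simpl; auto. rewrite IHn by (intros; apply H; lia). rewrite H by lia; auto. Qed.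

Lemma rsum_zero n g : (forall k, (k < n)%nat -> g k = 0) -> rsum n g = 0.
Proof. induction n; intros H; simpl; auto. rewrite IHn by (intros; apply H; lia). rewrite H by lia; ring. Qed.

Lemma rsum_pick n g s : (forall k, k <> s -> g k = 0) -> ((n <= s)%nat -> g s = 0) -> rsum n g = g s.
Proof.
  induction n; intros H1 H2; simpl.
  - symmetry; apply H2; lia.
  - destruct (Nat.eq_dec n s) as [->|Hne].
    + rewrite rsum_zero by (intros; apply H1; lia). ring.
    + rewrite IHn; [rewrite (H1 n Hne); ring | auto | intros; apply H2; lia].
Qed.

Lemma rsum_plus n g h : rsum n (fun k => g k + h k) = rsum n g + rsum n h.
Proof. induction n; simpl; [ring| rewrite IHn; ring]. Qed.
Lemma rsum_scal n c g : rsum n (fun k => c * g k) = c * rsum n g.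
Proof. induction n; simpl; [ring| rewrite IHn; ring]. Qed.
Lemma rsum_shift m g : rsum (S m) g = g O + rsum m (fun k => g (S k)).
Proof. induction m; simpl in *; [ring|]. rewrite IHm. ring. Qed.
Lemma rsum_le n g h : (forall k, (k < n)%nat -> g k <= h k) -> rsum n g <= rsum n h.
Proof. induction n; intros H; simpl; [lra|]. specialize (IHn (fun k Hk => H k ltac:(lia))). specialize (H n ltac:(lia)). lra. Qed.
Lemma rsum_nonneg n g : (forall k, (k < n)%nat -> 0 <= g k) -> 0 <= rsum n g.
Proof. intros H. rewrite <- (rsum_zero n (fun _ => 0)) by auto. apply rsum_le; auto. Qed.
Lemma rsum_le_term n g s : (forall k, (k < n)%nat -> 0 <= g k) -> (s < n)%nat -> g s <= rsum n g.
Proof.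
  induction n; intros H Hs; simpl; [lia|].
  destruct (Nat.eq_dec s n) as [->|Hne].
  - pose proof (rsum_nonneg n g (fun k Hk => H k ltac:(lia))). lra.
  - pose proof (IHn (fun k Hk => H k ltac:(lia)) ltac:(lia)). pose proof (H n ltac:(lia)). lra.
Qed.

Lemma sandwich_pick d A rho s i j :
  supported d rho ->
  (forall k, k <> s i -> A i k = C0) -> (forall k, k <> s j -> A j k = C0) ->
  sandwich d A rho i j = Cmul (Cmul (A i (s i)) (rho (s i) (s j))) (Cconj (A j (s j))).
Proof.
  intros Hs Hi Hj.
  assert (Hin : forall k, Csum d (fun l => Cmul (Cmul (A i k) (rho k l)) (Cconj (A j l)))
                  = Cmul (Cmul (A i k) (rho k (s j))) (Cconj (A j (s j)))).
  { intros k. apply Cext.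
    - rewrite Re_Csum, (rsum_pick _ _ (s j)); [reflexivity| |].
      + intros l Hl. rewrite (Hj l Hl). destruct (A i k), (rho k l); simpl; ring.
      + intros Hl. rewrite (Hs k (s j)) by auto. destruct (A i k), (A j (s j)); simpl; ring.
    - rewrite Im_Csum, (rsum_pick _ _ (s j)); [reflexivity| |].
      + intros l Hl. rewrite (Hj l Hl). destruct (A i k), (rho k l); simpl; ring.
      + intros Hl. rewrite (Hs k (s j)) by auto. destruct (A i k), (A j (s j)); simpl; ring. }
  unfold sandwich. apply Cext.
  - rewrite Re_Csum. rewrite (rsum_pick d _ (s i)).
    + rewrite Hin. reflexivity.
    + intros k Hk. rewrite Hin, (Hi k Hk). destruct (rho k (s j)), (A j (s j)); simpl; ring.
    + intros Hk. rewrite Hin, (Hs (s i) (s j)) by auto. destruct (A i (s i)), (A j (s j)); simpl; ring.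
  - rewrite Im_Csum. rewrite (rsum_pick d _ (s i)).
    + rewrite Hin. reflexivity.
    + intros k Hk. rewrite Hin, (Hi k Hk). destruct (rho k (s j)), (A j (s j)); simpl; ring.
    + intros Hk. rewrite Hin, (Hs (s i) (s j)) by auto. destruct (A i (s i)), (A j (s j)); simpl; ring.
Qed.

Definition Yf nbar th2 n := (sin (th2 * sqrt (INR n) / 2) / sqrt (INR n))
        * cos (theta1 nbar * sqrt (INR n + 1) / 2).
Definition Gc nbar th2 i := Re (Mg nbar th2 i (pred i)).
Definition Ec nbar th2 i := Re (Me nbar th2 i i).
Definition Hc nbar th2 i := sqrt (INR (S i)) * Yf nbar th2 (S i).

Lemma Mg_zero nbar th2 i k : k <> pred i -> Mg nbar th2 i k = C0.
Proof.
  intros H. unfold Mg, mul_fN, cre. destruct (Nat.eqb_spec i (S k)).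
  - subst. simpl in H. lia.
  - apply Cext; simpl; ring.
Qed.
Lemma Mg_im nbar th2 i : Im (Mg nbar th2 i (pred i)) = 0.
Proof. unfold Mg, mul_fN, cre. destruct (Nat.eqb i (S (pred i))); simpl; ring. Qed.
Lemma Me_zero nbar th2 i k : k <> i -> Me nbar th2 i k = C0.
Proof. intros H. unfold Me, fN. destruct (Nat.eqb_spec i k); [lia|reflexivity]. Qed.
Lemma Me_im nbar th2 i : Im (Me nbar th2 i i) = 0.
Proof. unfold Me, fN. rewrite Nat.eqb_refl. reflexivity. Qed.
Lemma Mm_zero nbar th2 phi i k : k <> S i -> Mm nbar th2 phi i k = C0.
Proof.
  intros H. unfold Mm, scale_op, mul_fN, ann. destruct (Nat.eqb_spec k (S i)); [lia|].
  apply Cext; simpl; ring.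
Qed.
Lemma Mm_val nbar th2 phi i : Mm nbar th2 phi i (S i) = Cmul (Cexpi phi) (RtoC (Hc nbar th2 i)).
Proof.
  unfold Mm, scale_op, mul_fN, ann, Hc, Yf. rewrite Nat.eqb_refl.
  apply Cext; simpl; ring.
Qed.

Lemma Re_add a b : Re (Cadd a b) = Re a + Re b. Proof. reflexivity. Qed.
Lemma Im_add a b : Im (Cadd a b) = Im a + Im b. Proof. reflexivity. Qed.

Lemma real_sand g z g' : Im g = 0 -> Im g' = 0 ->
  Re (Cmul (Cmul g z) (Cconj g')) = Re g * Re g' * Re z /\
  Im (Cmul (Cmul g z) (Cconj g')) = Re g * Re g' * Im z.
Proof. destruct g, g', z; simpl; intros; subst; split; ring. Qed.

Lemma phase_sand p a b z :
  Re (Cmul (Cmul (Cmul (Cexpi p) (RtoC a)) z) (Cconj (Cmul (Cexpi p) (RtoC b)))) = a * b * Re z /\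
  Im (Cmul (Cmul (Cmul (Cexpi p) (RtoC a)) z) (Cconj (Cmul (Cexpi p) (RtoC b)))) = a * b * Im z.
Proof.
  pose proof (sin2_cos2 p) as E. unfold Rsqr in E.
  destruct z as [zr zi]; unfold Cexpi; simpl; split.
  - transitivity (a * b * zr * (sin p * sin p + cos p * cos p)); [ring|rewrite E; ring].
  - transitivity (a * b * zi * (sin p * sin p + cos p * cos p)); [ring|rewrite E; ring].
Qed.

Lemma Phi_entry nbar th2 phi rho i j : supported (dimD nbar) rho ->
  Re (Phi nbar th2 phi rho i j) =
    Gc nbar th2 i * Gc nbar th2 j * Re (rho (pred i) (pred j))
  + Ec nbar th2 i * Ec nbar th2 j * Re (rho i j)
  + Hc nbar th2 i * Hc nbar th2 j * Re (rho (S i) (S j)) /\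
  Im (Phi nbar th2 phi rho i j) =
    Gc nbar th2 i * Gc nbar th2 j * Im (rho (pred i) (pred j))
  + Ec nbar th2 i * Ec nbar th2 j * Im (rho i j)
  + Hc nbar th2 i * Hc nbar th2 j * Im (rho (S i) (S j)).
Proof.
  intros Hs. unfold Phi, op_add.
  rewrite (sandwich_pick _ _ _ pred i j Hs (Mg_zero nbar th2 i) (Mg_zero nbar th2 j)).
  rewrite (sandwich_pick _ _ _ (fun x => x) i j Hs (Me_zero nbar th2 i) (Me_zero nbar th2 j)).
  rewrite (sandwich_pick _ _ _ S i j Hs (Mm_zero nbar th2 phi i) (Mm_zero nbar th2 phi j)).
  rewrite !Mm_val.
  destruct (real_sand _ (rho (pred i) (pred j)) _ (Mg_im nbar th2 i) (Mg_im nbar th2 j)) as [R1 I1].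
  destruct (real_sand _ (rho i j) _ (Me_im nbar th2 i) (Me_im nbar th2 j)) as [R2 I2].
  destruct (phase_sand phi (Hc nbar th2 i) (Hc nbar th2 j) (rho (S i) (S j))) as [R3 I3].
  unfold Gc, Ec. rewrite !Re_add, !Im_add. rewrite R1, R2, R3, I1, I2, I3. split; reflexivity.
Qed.

Definition aa nbar n := theta1 nbar * sqrt (INR n + 1) / 2.
Definition bb th2 n := th2 * sqrt (INR n) / 2 / 2.
Definition Ap nbar th2 n := Gc nbar th2 (S n) ^ 2.
Definition Bp nbar th2 n := match n with O => 0 | S m => Hc nbar th2 m ^ 2 end.
Definition Ep nbar th2 n := Ec nbar th2 n ^ 2.

Lemma Gc0 nbar th2 : Gc nbar th2 0 = 0.
Proof. unfold Gc, Mg, mul_fN, cre. simpl. ring. Qed.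

Lemma sqS n : sqrt (INR (S n)) = sqrt (INR n + 1).
Proof. rewrite S_INR; reflexivity. Qed.
Lemma sqpos n : 0 < sqrt (INR n + 1).
Proof. apply sqrt_lt_R0. pose proof (pos_INR n). lra. Qed.

Lemma Gc_S nbar th2 n : Gc nbar th2 (S n) =
  2 * cos (bb th2 n) ^ 2 * sin (aa nbar n) * cos (aa nbar n).
Proof.
  unfold Gc, Mg, mul_fN, cre. change (pred (S n)) with n. rewrite Nat.eqb_refl. cbn [Re Im Cmul RtoC].
  rewrite sqS.
  replace (th2 * sqrt (INR n) / 2) with (2 * bb th2 n) by (unfold bb; field).
  replace (theta1 nbar * sqrt (INR n + 1)) with (2 * aa nbar n) by (unfold aa; field).
  rewrite cos_2a_cos, sin_2a. pose proof (sqpos n). field. lra.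
Qed.

Lemma Ec_val nbar th2 n : Ec nbar th2 n =
  cos (aa nbar n) ^ 2 * (cos (bb th2 n) ^ 2 - sin (bb th2 n) ^ 2) - sin (aa nbar n) ^ 2.
Proof.
  unfold Ec, Me, fN. rewrite Nat.eqb_refl. cbn [Re RtoC].
  replace (th2 * sqrt (INR n) / 2) with (2 * bb th2 n) by (unfold bb; field).
  rewrite cos_2a. unfold aa. ring.
Qed.

Lemma Hc_val nbar th2 m : Hc nbar th2 m =
  2 * sin (bb th2 (S m)) * cos (bb th2 (S m)) * cos (aa nbar (S m)).
Proof.
  unfold Hc, Yf.
  replace (th2 * sqrt (INR (S m)) / 2) with (2 * bb th2 (S m)) by (unfold bb; field).
  rewrite sin_2a. unfold aa. rewrite (sqS m). pose proof (sqpos m). field. lra.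
Qed.

Lemma Ap_val nbar th2 n : Ap nbar th2 n =
  4 * cos (bb th2 n) ^ 4 * sin (aa nbar n) ^ 2 * cos (aa nbar n) ^ 2.
Proof. unfold Ap. rewrite Gc_S. ring. Qed.

Lemma Bp_val nbar th2 n : Bp nbar th2 n =
  4 * sin (bb th2 n) ^ 2 * cos (bb th2 n) ^ 2 * cos (aa nbar n) ^ 2.
Proof.
  destruct n as [|m].
  - simpl Bp. unfold bb. simpl INR. rewrite sqrt_0.
    replace (th2 * 0 / 2 / 2) with 0 by field. rewrite sin_0. ring.
  - simpl Bp. rewrite Hc_val. ring.
Qed.

Lemma sum1 nbar th2 n : Ap nbar th2 n + Ep nbar th2 n + Bp nbar th2 n = 1.
Proof.
  unfold Ep. rewrite Ap_val, Bp_val, Ec_val.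
  pose proof (sin2_cos2 (aa nbar n)) as E1. pose proof (sin2_cos2 (bb th2 n)) as E2.
  unfold Rsqr in E1, E2.
  set (sa := sin (aa nbar n)) in *. set (ca := cos (aa nbar n)) in *.
  set (sb := sin (bb th2 n)) in *. set (cb := cos (bb th2 n)) in *.
  replace (sa ^ 2) with (1 - ca ^ 2) by (simpl; lra).
  replace (sb ^ 2) with (1 - cb ^ 2) by (simpl; lra).
  ring.
Qed.

Lemma aa_eq nbar n : aa nbar n = PI / 2 * (sqrt (INR n + 1) / sqrt (INR nbar + 1)).
Proof. unfold aa, theta1. pose proof (sqpos nbar). field. lra. Qed.

Lemma alpha_half nbar n : alpha nbar n / 2 = aa nbar n.
Proof.
  rewrite aa_eq. unfold alpha. rewrite sqrt_div.
  - field. pose proof (sqpos nbar). lra.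
  - pose proof (pos_INR n). lra.
  - pose proof (pos_INR nbar). lra.
Qed.

Lemma sqrt4 z : 0 <= z -> sqrt (4 * z) = 2 * sqrt z.
Proof.
  intros. rewrite sqrt_mult by lra. replace 4 with (2*2) by ring. rewrite sqrt_square by lra. reflexivity.
Qed.

Lemma aa_low nbar n : (n < nbar)%nat -> 0 < aa nbar n < PI / 2.
Proof.
  intros H. rewrite aa_eq. pose proof (sqpos nbar). pose proof (sqpos n). pose proof PI_RGT_0.
  assert (sqrt (INR n + 1) < sqrt (INR nbar + 1)).
  { apply sqrt_lt_1_alt. split. pose proof (pos_INR n); lra. apply lt_INR in H. lra. }
  assert (0 < sqrt (INR n + 1) / sqrt (INR nbar + 1) < 1).
  { split. apply Rdiv_lt_0_compat; lra. apply Rmult_lt_reg_r with (sqrt (INR nbar + 1)); auto.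
    field_simplify; lra. }
  nra.
Qed.

Lemma aa_nbar nbar : aa nbar nbar = PI / 2.
Proof. rewrite aa_eq. pose proof (sqpos nbar). field. lra. Qed.

Lemma aa_high nbar n : (nbar < n < 4 * nbar + 3)%nat -> PI / 2 < aa nbar n < PI.
Proof.
  intros [H1 H2]. rewrite aa_eq. pose proof (sqpos nbar). pose proof (sqpos n). pose proof PI_RGT_0.
  pose proof (pos_INR nbar).
  assert (sqrt (INR nbar + 1) < sqrt (INR n + 1)).
  { apply sqrt_lt_1_alt. split. lra. apply lt_INR in H1. lra. }
  assert (sqrt (INR n + 1) < 2 * sqrt (INR nbar + 1)).
  { rewrite <- sqrt4 by lra. apply sqrt_lt_1_alt. split. pose proof (pos_INR n); lra.
    apply lt_INR in H2. rewrite plus_INR, mult_INR in H2. simpl in H2. lra. }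
  assert (1 < sqrt (INR n + 1) / sqrt (INR nbar + 1) < 2).
  { split; apply Rmult_lt_reg_r with (sqrt (INR nbar + 1)); auto; field_simplify; lra. }
  nra.
Qed.

Lemma aa_top nbar : aa nbar (4 * nbar + 3) = PI.
Proof.
  rewrite aa_eq. pose proof (sqpos nbar). pose proof (pos_INR nbar).
  replace (INR (4 * nbar + 3) + 1) with (4 * (INR nbar + 1))
    by (rewrite plus_INR, mult_INR; simpl; ring).
  rewrite sqrt4 by lra. field. lra.
Qed.

Lemma bb_pos th2 n : 0 < th2 -> (1 <= n)%nat -> 0 < bb th2 n.
Proof.
  intros. unfold bb. assert (0 < sqrt (INR n)). { apply sqrt_lt_R0. apply lt_0_INR. lia. } nra.
Qed.

Lemma sin_bb_nz nbar th2 n : 0 < th2 -> (1 <= n <= 4 * nbar + 3)%nat ->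
  (forall (n k : nat), (1 <= n <= 4 * nbar + 3)%nat -> th2 <> INR k * PI / sqrt (INR n)) ->
  sin (bb th2 n) <> 0.
Proof.
  intros Ht Hn hres E. apply sin_eq_0_0 in E. destruct E as [k Hk].
  pose proof (bb_pos th2 n Ht ltac:(lia)). pose proof PI_RGT_0.
  assert (Hk0 : (0 <= k)%Z). { destruct (Z_le_gt_dec 0 k); auto. apply Z.gt_lt in g. apply IZR_lt in g. nra. }
  apply (hres n (4 * Z.to_nat k)%nat Hn).
  assert (Hs : 0 < sqrt (INR n)) by (apply sqrt_lt_R0; apply lt_0_INR; lia).
  rewrite mult_INR, (INR_IZR_INZ (Z.to_nat k)), Z2Nat.id by auto. simpl (INR 4).
  unfold bb in Hk. field_simplify_eq; [|lra]. replace 4 with (2*2) by ring. nra.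
Qed.

Lemma cos_bb_nz nbar th2 n : 0 < th2 -> (1 <= n <= 4 * nbar + 3)%nat ->
  (forall (n k : nat), (1 <= n <= 4 * nbar + 3)%nat -> th2 <> INR k * PI / sqrt (INR n)) ->
  cos (bb th2 n) <> 0.
Proof.
  intros Ht Hn hres E. apply cos_eq_0_0 in E. destruct E as [k Hk].
  pose proof (bb_pos th2 n Ht ltac:(lia)). pose proof PI_RGT_0.
  assert (Hk0 : (0 <= k)%Z).
  { destruct (Z_le_gt_dec 0 k); auto. apply Z.gt_lt in g.
    assert (IZR k <= -1) by (apply IZR_le; lia). nra. }
  apply (hres n (4 * Z.to_nat k + 2)%nat Hn).
  assert (Hs : 0 < sqrt (INR n)) by (apply sqrt_lt_R0; apply lt_0_INR; lia).
  rewrite plus_INR, mult_INR, (INR_IZR_INZ (Z.to_nat k)), Z2Nat.id by auto. simpl (INR 4). simpl (INR 2).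
  unfold bb in Hk. field_simplify_eq; [|lra]. nra.
Qed.

Definition Dl nbar th2 (f : nat -> R) n :=
  Ap nbar th2 n * (f (S n) - f n) + Bp nbar th2 n * (f (pred n) - f n).

Lemma sqp x : x <> 0 -> 0 < x ^ 2.
Proof. intros H. pose proof (Rsqr_pos_lt x H). unfold Rsqr in *. simpl. lra. Qed.

Lemma sin_sq_le x : sin x ^ 2 <= 1.
Proof. pose proof (sin2_cos2 x). unfold Rsqr in *. simpl. nra. Qed.
Lemma cos_sq_le x : cos x ^ 2 <= 1.
Proof. pose proof (sin2_cos2 x). unfold Rsqr in *. simpl. nra. Qed.


Lemma f_high nbar th2 eta f :
  0 < th2 ->
  (forall (n k : nat), (1 <= n <= 4 * nbar + 3)%nat -> th2 <> INR k * PI / sqrt (INR n)) ->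
  0 < eta < 1 -> f_spec nbar th2 eta f ->
  forall k, (k <= 3 * nbar + 2)%nat -> 0 < f (S nbar + k)%nat - f (nbar + k)%nat /\ 1 <= f (S nbar + k)%nat.
Proof.
  intros Ht hres He hf. destruct hf as (f0 & f1 & fm & fl & fh & ft).
  induction k; intros Hk.
  - rewrite !Nat.add_0_r. rewrite f0, f1. lra.
  - destruct (IHk ltac:(lia)) as [IH1 IH2].
    set (n := (S nbar + k)%nat) in *.
    replace (S nbar + S k)%nat with (S n) by lia.
    replace (nbar + S k)%nat with n by lia.
    replace (nbar + k)%nat with (pred n) in IH1 by lia.
    rewrite (fh n ltac:(lia)).
    change (beta th2 n / 2) with (bb th2 n).
    pose proof (sqp _ (sin_bb_nz nbar th2 n Ht ltac:(lia) hres)).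
    assert (0 < eta * sin (bb th2 n) ^ 2 * (f n - f (pred n))).
    { apply Rmult_lt_0_compat; [apply Rmult_lt_0_compat|]; lra. }
    lra.
Qed.

Lemma f_high' nbar th2 eta f :
  0 < th2 ->
  (forall (n k : nat), (1 <= n <= 4 * nbar + 3)%nat -> th2 <> INR k * PI / sqrt (INR n)) ->
  0 < eta < 1 -> f_spec nbar th2 eta f ->
  forall n, (nbar < n <= 4 * nbar + 3)%nat -> 0 < f n - f (pred n) /\ 1 <= f n.
Proof.
  intros Ht hres He hf n Hn.
  destruct (f_high nbar th2 eta f Ht hres He hf (n - S nbar) ltac:(lia)).
  replace (S nbar + (n - S nbar))%nat with n in * by lia.
  replace (nbar + (n - S nbar))%nat with (pred n) in * by lia. auto.
Qed.

Lemma f_low nbar th2 eta f : (1 <= nbar)%nat ->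
  0 < th2 ->
  (forall (n k : nat), (1 <= n <= 4 * nbar + 3)%nat -> th2 <> INR k * PI / sqrt (INR n)) ->
  0 < eta < 1 -> f_spec nbar th2 eta f ->
  forall k, (k < nbar)%nat -> 0 < f (nbar - 1 - k)%nat - f (nbar - k)%nat /\ 1 <= f (nbar - 1 - k)%nat.
Proof.
  intros Hn Ht hres He hf. destruct hf as (f0 & f1 & fm & fl & fh & ft).
  induction k; intros Hk.
  - replace (nbar - 1 - 0)%nat with (pred nbar) by lia. rewrite Nat.sub_0_r, f0, fm. lra.
  - destruct (IHk ltac:(lia)) as [IH1 IH2].
    set (n := (nbar - 1 - k)%nat) in *.
    replace (nbar - 1 - S k)%nat with (pred n) by lia.
    replace (nbar - S k)%nat with n by lia.
    replace (nbar - k)%nat with (S n) in IH1 by lia.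
    rewrite (fl n ltac:(lia)).
    change (beta th2 n / 2) with (bb th2 n). rewrite alpha_half.
    pose proof (sqp _ (cos_bb_nz nbar th2 n Ht ltac:(lia) hres)).
    destruct (aa_low nbar n ltac:(lia)).
    assert (0 < sin (aa nbar n)) by (apply sin_gt_0; pose proof PI_RGT_0; lra).
    assert (0 < sin (aa nbar n) ^ 2) by (apply sqp; lra).
    assert (0 < eta * sin (aa nbar n) ^ 2 * cos (bb th2 n) ^ 2 * (f n - f (S n))).
    { apply Rmult_lt_0_compat; [apply Rmult_lt_0_compat; [apply Rmult_lt_0_compat|]|]; lra. }
    lra.
Qed.

Lemma f_low' nbar th2 eta f : (1 <= nbar)%nat ->
  0 < th2 ->
  (forall (n k : nat), (1 <= n <= 4 * nbar + 3)%nat -> th2 <> INR k * PI / sqrt (INR n)) ->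
  0 < eta < 1 -> f_spec nbar th2 eta f ->
  forall n, (n < nbar)%nat -> 0 < f n - f (S n) /\ 1 <= f n.
Proof.
  intros Hn Ht hres He hf n Hlt.
  destruct (f_low nbar th2 eta f Hn Ht hres He hf (nbar - 1 - n) ltac:(lia)).
  replace (nbar - 1 - (nbar - 1 - n))%nat with n in * by lia.
  replace (nbar - (nbar - 1 - n))%nat with (S n) in * by lia. auto.
Qed.

Lemma Dl_nbar nbar th2 f : Dl nbar th2 f nbar = 0.
Proof. unfold Dl. rewrite Ap_val, Bp_val, aa_nbar, cos_PI2. ring. Qed.

Lemma Ap_top nbar th2 : Ap nbar th2 (4 * nbar + 3) = 0.
Proof. rewrite Ap_val, aa_top, sin_PI. ring. Qed.

Lemma pos5 a b c d e : 0<a->0<b->0<c->0<d->0<e->0<a*b*c*d*e.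
Proof. intros. repeat apply Rmult_lt_0_compat; auto. Qed.
Lemma pos4 a b c d : 0<a->0<b->0<c->0<d->0<a*b*c*d.
Proof. intros. repeat apply Rmult_lt_0_compat; auto. Qed.

Lemma neg_of P Q : 0 < P -> Q < 0 -> P * Q < 0.
Proof. intros. nra. Qed.

Lemma Dl_neg nbar th2 eta f : (1 <= nbar)%nat ->
  0 < th2 ->
  (forall (n k : nat), (1 <= n <= 4 * nbar + 3)%nat -> th2 <> INR k * PI / sqrt (INR n)) ->
  0 < eta < 1 -> f_spec nbar th2 eta f ->
  forall n, (n <= 4 * nbar + 3)%nat -> n <> nbar -> Dl nbar th2 f n < 0.
Proof.
  intros Hn Ht hres He hf n Hn1 Hn2. pose proof PI_RGT_0.
  pose proof hf as hf'. destruct hf' as (f0 & f1 & fm & fl & fh & ft).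
  unfold Dl. rewrite Ap_val, Bp_val.
  set (sa := sin (aa nbar n)). set (ca := cos (aa nbar n)).
  set (sb := sin (bb th2 n)). set (cb := cos (bb th2 n)).
  destruct (Nat.lt_ge_cases n nbar) as [Hlt|Hge].
  - destruct (f_low' nbar th2 eta f Hn Ht hres He hf n Hlt) as [He1 _].
    destruct (aa_low nbar n Hlt) as [Ha1 Ha2].
    assert (Hsa : 0 < sa) by (apply sin_gt_0; lra).
    assert (Hca : 0 < ca) by (apply cos_gt_0; lra).
    destruct n as [|m].
    + assert (Hcb : cb = 1).
      { unfold cb, bb. simpl INR. rewrite sqrt_0. replace (th2 * 0 / 2 / 2) with 0 by field. apply cos_0. }
      assert (Hsb : sb = 0).
      { unfold sb, bb. simpl INR. rewrite sqrt_0. replace (th2 * 0 / 2 / 2) with 0 by field. apply sin_0. }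
      rewrite Hcb, Hsb. assert (0 < sa ^ 2 * ca ^ 2) by (apply Rmult_lt_0_compat; apply sqp; lra). nra.
    + rewrite (fl (S m) ltac:(lia)). change (beta th2 (S m) / 2) with (bb th2 (S m)). rewrite alpha_half.
      fold sa cb.
      assert (Hcb : 0 < cb ^ 2) by (apply sqp; apply (cos_bb_nz nbar); auto; lia).
      pose proof (sin_sq_le (bb th2 (S m))). fold sb in H0.
      set (e := f (S m) - f (S (S m))) in *.
      replace (4 * cb ^ 4 * sa ^ 2 * ca ^ 2 * (f (S (S m)) - f (S m)) +
               4 * sb ^ 2 * cb ^ 2 * ca ^ 2 * (f (S m) + eta * sa ^ 2 * cb ^ 2 * e - f (S m)))
        with ((4 * e * (cb^2 * cb^2) * sa ^ 2 * ca ^ 2) * (eta * sb ^ 2 - 1)) by (unfold e; ring).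
      apply neg_of; [|nra].
      assert (0 < sa ^ 2) by (apply sqp; lra). assert (0 < ca ^ 2) by (apply sqp; lra).
      apply pos5; try lra. apply Rmult_lt_0_compat; lra.
  - assert (Hgt : (nbar < n)%nat) by lia.
    destruct (f_high' nbar th2 eta f Ht hres He hf n ltac:(lia)) as [Hd1 _].
    assert (Hsb : 0 < sb ^ 2) by (apply sqp; apply (sin_bb_nz nbar); auto; lia).
    assert (Hcb : 0 < cb ^ 2) by (apply sqp; apply (cos_bb_nz nbar); auto; lia).
    set (dd := f n - f (pred n)) in *.
    destruct (Nat.lt_ge_cases n (4 * nbar + 3)) as [Hlt2|Hge2].
    + destruct (aa_high nbar n ltac:(lia)) as [Ha1 Ha2].
      assert (Hca : ca < 0) by (apply cos_lt_0; lra).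
      assert (0 < ca ^ 2) by (apply sqp; lra).
      rewrite (fh n ltac:(lia)). change (beta th2 n / 2) with (bb th2 n). fold sb.
      pose proof (cos_sq_le (bb th2 n)). pose proof (sin_sq_le (aa nbar n)). fold cb sa in H1, H2.
      replace (4 * cb ^ 4 * sa ^ 2 * ca ^ 2 * (f n + eta * sb ^ 2 * (f n - f (pred n)) - f n) +
               4 * sb ^ 2 * cb ^ 2 * ca ^ 2 * (f (pred n) - f n))
        with ((4 * dd * sb ^ 2 * cb ^ 2 * ca ^ 2) * (eta * cb ^ 2 * sa ^ 2 - 1)) by (unfold dd; ring).
      apply neg_of; [|].
      * apply pos5; lra.
      * assert (cb ^ 2 * sa ^ 2 <= 1) by nra. nra.
    + assert (Hn3 : n = (4 * nbar + 3)%nat) by lia.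
      rewrite (ft (S n) ltac:(lia)). rewrite <- Hn3.
      assert (Hca : ca = -1) by (unfold ca; rewrite Hn3, aa_top; apply cos_PI).
      rewrite Hca.
      replace (4 * cb ^ 4 * sa ^ 2 * (-1) ^ 2 * (f n - f n) + 4 * sb ^ 2 * cb ^ 2 * (-1) ^ 2 * (f (pred n) - f n))
        with ((4 * dd * sb ^ 2 * cb ^ 2) * (-1)) by (unfold dd; ring).
      apply neg_of; [|lra]. apply pos4; lra.
Qed.

Lemma dimD_S nbar : dimD nbar = S (4 * nbar + 3).
Proof. unfold dimD; lia. Qed.

Lemma diag_Phi nbar th2 phi rho i : supported (dimD nbar) rho ->
  Re (Phi nbar th2 phi rho i i) = Gc nbar th2 i ^ 2 * Re (rho (pred i) (pred i))
    + Ec nbar th2 i ^ 2 * Re (rho i i) + Hc nbar th2 i ^ 2 * Re (rho (S i) (S i)).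
Proof. intros Hs. destruct (Phi_entry nbar th2 phi rho i i Hs) as [E _]. rewrite E. ring. Qed.

Lemma sum_Phi nbar th2 phi rho (h : nat -> R) : supported (dimD nbar) rho ->
  rsum (dimD nbar) (fun i => h i * Re (Phi nbar th2 phi rho i i)) =
  rsum (dimD nbar) (fun n => Re (rho n n) *
     (Ap nbar th2 n * h (S n) + Ep nbar th2 n * h n + Bp nbar th2 n * h (pred n))).
Proof.
  intros Hs.
  rewrite (rsum_ext _ _ (fun i => h i * (Gc nbar th2 i ^ 2 * Re (rho (pred i) (pred i)))
       + h i * (Ec nbar th2 i ^ 2 * Re (rho i i)) + h i * (Hc nbar th2 i ^ 2 * Re (rho (S i) (S i)))))
    by (intros; rewrite diag_Phi by auto; ring).
  rewrite (rsum_ext (dimD nbar) (fun n => Re (rho n n) *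
     (Ap nbar th2 n * h (S n) + Ep nbar th2 n * h n + Bp nbar th2 n * h (pred n)))
     (fun n => Re (rho n n) * (Ap nbar th2 n * h (S n)) + Re (rho n n) * (Ep nbar th2 n * h n)
        + Re (rho n n) * (Bp nbar th2 n * h (pred n)))) by (intros; ring).
  rewrite !rsum_plus.
  assert (Hd : Re (rho (dimD nbar) (dimD nbar)) = 0) by (rewrite (Hs (dimD nbar) (dimD nbar)) by lia; reflexivity).
  rewrite dimD_S in *. set (m := (4 * nbar + 3)%nat) in *.
  f_equal; [f_equal|].
  - rewrite rsum_shift. rewrite Gc0. simpl rsum at 2. rewrite Ap_top.
    replace (h 0%nat * (0 ^ 2 * Re (rho (pred 0) (pred 0)))) with 0 by ring.
    rewrite Rplus_0_l, Rmult_0_l, Rmult_0_r, Rplus_0_r. apply rsum_ext. intros. simpl pred. unfold Ap. ring.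
  - apply rsum_ext. intros. unfold Ep. ring.
  - rewrite (rsum_shift m (fun n => Re (rho n n) * (Bp nbar th2 n * h (pred n)))). simpl Bp at 1.
    change (rsum (S m) (fun k => h k * (Hc nbar th2 k ^ 2 * Re (rho (S k) (S k)))))
      with (rsum m (fun k => h k * (Hc nbar th2 k ^ 2 * Re (rho (S k) (S k)))) +
            h m * (Hc nbar th2 m ^ 2 * Re (rho (S m) (S m)))).
    rewrite Hd. replace (h m * (Hc nbar th2 m ^ 2 * 0)) with 0 by ring.
    replace (Re (rho 0%nat 0%nat) * (0 * h (pred 0))) with 0 by ring.
    rewrite Rplus_0_l, Rplus_0_r.
    apply rsum_ext. intros. simpl pred. simpl Bp. ring.
Qed.

Lemma trace_Phi nbar th2 phi rho : supported (dimD nbar) rho ->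
  rsum (dimD nbar) (fun i => Re (Phi nbar th2 phi rho i i)) = rsum (dimD nbar) (fun n => Re (rho n n)).
Proof.
  intros Hs. pose proof (sum_Phi nbar th2 phi rho (fun _ => 1) Hs) as E.
  transitivity (rsum (dimD nbar) (fun i => 1 * Re (Phi nbar th2 phi rho i i))).
  { apply rsum_ext. intros. rewrite Rmult_1_l. reflexivity. }
  rewrite E. apply rsum_ext. intros. rewrite !Rmult_1_r, (sum1 nbar th2 k). ring.
Qed.

Lemma Vf_eq d f rho : Vf d f rho = rsum d (fun n => f n * Re (rho n n)).
Proof. unfold Vf. rewrite Re_Csum. apply rsum_ext. intros. simpl. ring. Qed.

Lemma V_Phi nbar th2 phi f rho : supported (dimD nbar) rho ->
  Vf (dimD nbar) f (Phi nbar th2 phi rho) =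
  Vf (dimD nbar) f rho + rsum (dimD nbar) (fun n => Re (rho n n) * Dl nbar th2 f n).
Proof.
  intros Hs. rewrite !Vf_eq. rewrite sum_Phi by auto. rewrite <- rsum_plus. apply rsum_ext.
  intros. unfold Dl. pose proof (sum1 nbar th2 k). replace (Ep nbar th2 k) with (1 - Ap nbar th2 k - Bp nbar th2 k) by lra.
  ring.
Qed.

Lemma CS2 a b c d X1 Y1 X2 Y2 : 0 <= X1 -> 0 <= Y1 -> 0 <= X2 -> 0 <= Y2 ->
  a ^ 2 + b ^ 2 <= X1 * Y1 -> c ^ 2 + d ^ 2 <= X2 * Y2 ->
  (a + c) ^ 2 + (b + d) ^ 2 <= (X1 + X2) * (Y1 + Y2).
Proof.
  intros H1 H2 H3 H4 H5 H6.
  assert (L1 : (a * c + b * d) ^ 2 <= (a ^ 2 + b ^ 2) * (c ^ 2 + d ^ 2)).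
  { assert ((a ^ 2 + b ^ 2) * (c ^ 2 + d ^ 2) - (a * c + b * d) ^ 2 = (a * d - b * c) ^ 2) by ring.
    assert (0 <= (a * d - b * c) ^ 2) by (apply pow2_ge_0). lra. }
  assert (L2 : (a ^ 2 + b ^ 2) * (c ^ 2 + d ^ 2) <= (X1 * Y1) * (X2 * Y2)).
  { apply Rmult_le_compat; try lra; apply Rplus_le_le_0_compat; apply pow2_ge_0. }
  assert (L3 : (X1 * Y1) * (X2 * Y2) <= ((X1 * Y2 + X2 * Y1) / 2) ^ 2).
  { assert (((X1 * Y2 + X2 * Y1) / 2) ^ 2 - (X1 * Y1) * (X2 * Y2) = ((X1 * Y2 - X2 * Y1) / 2) ^ 2) by field.
    assert (0 <= ((X1 * Y2 - X2 * Y1) / 2) ^ 2) by (apply pow2_ge_0). lra. }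
  assert (Ht : 0 <= (X1 * Y2 + X2 * Y1) / 2).
  { assert (0 <= X1 * Y2) by (apply Rmult_le_pos; auto). assert (0 <= X2 * Y1) by (apply Rmult_le_pos; auto). lra. }
  assert (L4 : a * c + b * d <= (X1 * Y2 + X2 * Y1) / 2).
  { destruct (Rle_dec (a * c + b * d) ((X1 * Y2 + X2 * Y1) / 2)) as [ok|nok]; auto.
    exfalso. apply Rnot_le_lt in nok. set (t := (X1 * Y2 + X2 * Y1) / 2) in *.
    set (s := a * c + b * d) in *. assert (t ^ 2 < s ^ 2) by nra. lra. }
  nra.
Qed.

Lemma CS1 u v R I P Q : R ^ 2 + I ^ 2 <= P * Q ->
  (u * v * R) ^ 2 + (u * v * I) ^ 2 <= (u ^ 2 * P) * (v ^ 2 * Q).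
Proof.
  intros H. replace ((u * v * R) ^ 2 + (u * v * I) ^ 2) with ((u * v) ^ 2 * (R ^ 2 + I ^ 2)) by ring.
  replace ((u ^ 2 * P) * (v ^ 2 * Q)) with ((u * v) ^ 2 * (P * Q)) by ring.
  apply Rmult_le_compat_l; auto. apply pow2_ge_0.
Qed.

Definition Inv nbar (rho : op) : Prop :=
  supported (dimD nbar) rho /\ (forall i, Im (rho i i) = 0) /\ (forall i, 0 <= Re (rho i i)) /\
  (forall i j, Re (rho i j) ^ 2 + Im (rho i j) ^ 2 <= Re (rho i i) * Re (rho j j)) /\
  rsum (dimD nbar) (fun i => Re (rho i i)) = 1.

Lemma Gc_d nbar th2 : Gc nbar th2 (dimD nbar) = 0.
Proof. rewrite dimD_S, Gc_S, aa_top, sin_PI. ring. Qed.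

Lemma Gc_out nbar th2 rho i y : supported (dimD nbar) rho -> (dimD nbar <= i)%nat ->
  Gc nbar th2 i * Re (rho (pred i) y) = 0 /\ Gc nbar th2 i * Im (rho (pred i) y) = 0.
Proof.
  intros Hs Hi. destruct (Nat.eq_dec i (dimD nbar)) as [->|Hne].
  - rewrite Gc_d. split; ring.
  - rewrite (Hs (pred i) y) by lia. simpl. split; ring.
Qed.
Lemma Gc_out' nbar th2 rho j y : supported (dimD nbar) rho -> (dimD nbar <= j)%nat ->
  Gc nbar th2 j * Re (rho y (pred j)) = 0 /\ Gc nbar th2 j * Im (rho y (pred j)) = 0.
Proof.
  intros Hs Hi. destruct (Nat.eq_dec j (dimD nbar)) as [->|Hne].
  - rewrite Gc_d. split; ring.
  - rewrite (Hs y (pred j)) by lia. simpl. split; ring.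
Qed.

Lemma Inv_Phi nbar th2 phi rho : Inv nbar rho -> Inv nbar (Phi nbar th2 phi rho).
Proof.
  intros (Hs & Him & Hre & Hcs & Htr).
  split; [|split; [|split; [|split]]].
  - intros i j Hij. destruct (Phi_entry nbar th2 phi rho i j Hs) as [ER EI].
    apply Cext; rewrite ?ER, ?EI; simpl.
    + destruct Hij as [Hi|Hj].
      * destruct (Gc_out nbar th2 rho i (pred j) Hs Hi) as [G1 _].
        rewrite (Hs i j), (Hs (S i) (S j)) by lia. simpl. rewrite Rmult_assoc, (Rmult_comm (Gc nbar th2 j)), <- Rmult_assoc, G1. ring.
      * destruct (Gc_out' nbar th2 rho j (pred i) Hs Hj) as [G1 _].
        rewrite (Hs i j), (Hs (S i) (S j)) by lia. simpl. rewrite Rmult_assoc, G1. ring.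
    + destruct Hij as [Hi|Hj].
      * destruct (Gc_out nbar th2 rho i (pred j) Hs Hi) as [_ G1].
        rewrite (Hs i j), (Hs (S i) (S j)) by lia. simpl. rewrite Rmult_assoc, (Rmult_comm (Gc nbar th2 j)), <- Rmult_assoc, G1. ring.
      * destruct (Gc_out' nbar th2 rho j (pred i) Hs Hj) as [_ G1].
        rewrite (Hs i j), (Hs (S i) (S j)) by lia. simpl. rewrite Rmult_assoc, G1. ring.
  - intros i. destruct (Phi_entry nbar th2 phi rho i i Hs) as [_ EI]. rewrite EI, !Him. ring.
  - intros i. rewrite diag_Phi by auto.
    pose proof (Hre (pred i)). pose proof (Hre i). pose proof (Hre (S i)).
    pose proof (pow2_ge_0 (Gc nbar th2 i)). pose proof (pow2_ge_0 (Ec nbar th2 i)). pose proof (pow2_ge_0 (Hc nbar th2 i)).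
    assert (0 <= Gc nbar th2 i ^ 2 * Re (rho (pred i) (pred i))) by (apply Rmult_le_pos; auto).
    assert (0 <= Ec nbar th2 i ^ 2 * Re (rho i i)) by (apply Rmult_le_pos; auto).
    assert (0 <= Hc nbar th2 i ^ 2 * Re (rho (S i) (S i))) by (apply Rmult_le_pos; auto).
    lra.
  - intros i j. rewrite !diag_Phi by auto. destruct (Phi_entry nbar th2 phi rho i j Hs) as [ER EI].
    rewrite ER, EI.
    assert (P : forall x u, 0 <= u ^ 2 * Re (rho x x)) by (intros; apply Rmult_le_pos; [apply pow2_ge_0|auto]).
    apply CS2; try apply Rplus_le_le_0_compat; try apply P.
    + apply CS2; try apply P; apply CS1; apply Hcs.
    + apply CS1; apply Hcs.
  - rewrite trace_Phi; auto.
Qed.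

Lemma rsum_two n g i j : i <> j -> (i < n)%nat -> (j < n)%nat ->
  (forall k, k <> i -> k <> j -> g k = 0) -> rsum n g = g i + g j.
Proof.
  intros Hij Hi Hj H.
  rewrite (rsum_ext n g (fun k => (if Nat.eqb k i then g k else 0) + (if Nat.eqb k i then 0 else g k))).
  2:{ intros k _. destruct (Nat.eqb k i); ring. }
  rewrite rsum_plus.
  rewrite (rsum_pick n (fun k => if Nat.eqb k i then g k else 0) i).
  2:{ intros k Hk. destruct (Nat.eqb_spec k i); auto; lia. }
  2:{ intros; lia. }
  rewrite (rsum_pick n (fun k => if Nat.eqb k i then 0 else g k) j).
  2:{ intros k Hk. destruct (Nat.eqb_spec k i); auto. }
  2:{ intros; lia. }
  rewrite Nat.eqb_refl. apply Nat.eqb_neq in Hij. rewrite (Nat.eqb_sym j i), Hij. ring.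
Qed.

Definition vec2 i j (x y : Defs.C) : nat -> Defs.C :=
  fun k => if Nat.eqb k i then x else if Nat.eqb k j then y else C0.

Lemma quad2 d rho i j x y : i <> j -> (i < d)%nat -> (j < d)%nat ->
  Re (Csum d (fun a => Csum d (fun b =>
        Cmul (Cmul (Cconj (vec2 i j x y a)) (rho a b)) (vec2 i j x y b)))) =
  Re (Cmul (Cmul (Cconj x) (rho i i)) x) + Re (Cmul (Cmul (Cconj x) (rho i j)) y) +
  (Re (Cmul (Cmul (Cconj y) (rho j i)) x) + Re (Cmul (Cmul (Cconj y) (rho j j)) y)).
Proof.
  intros Hij Hi Hj. rewrite Re_Csum.
  assert (Hv1 : vec2 i j x y i = x) by (unfold vec2; rewrite Nat.eqb_refl; auto).
  assert (Hv2 : vec2 i j x y j = y).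
  { unfold vec2. rewrite Nat.eqb_refl. apply Nat.eqb_neq in Hij. rewrite Nat.eqb_sym, Hij. auto. }
  assert (Hv0 : forall k, k <> i -> k <> j -> vec2 i j x y k = C0).
  { intros k H1 H2. unfold vec2. apply Nat.eqb_neq in H1. apply Nat.eqb_neq in H2. rewrite H1, H2. auto. }
  rewrite (rsum_two d _ i j Hij Hi Hj).
  - rewrite !Re_Csum. rewrite (rsum_two d _ i j Hij Hi Hj), (rsum_two d _ i j Hij Hi Hj).
    + rewrite Hv1, Hv2. ring.
    + intros k H1 H2. rewrite (Hv0 k H1 H2). destruct (Cconj (vec2 i j x y j)), (rho j k); simpl; ring.
    + intros k H1 H2. rewrite (Hv0 k H1 H2). destruct (Cconj (vec2 i j x y i)), (rho i k); simpl; ring.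
  - intros k H1 H2. rewrite Re_Csum. apply rsum_zero. intros. rewrite (Hv0 k H1 H2).
    destruct (rho k k0), (vec2 i j x y k0); simpl; ring.
Qed.

Lemma quad1 d rho i x : (i < d)%nat ->
  Re (Csum d (fun a => Csum d (fun b =>
        Cmul (Cmul (Cconj (vec2 i i x C0 a)) (rho a b)) (vec2 i i x C0 b)))) =
  Re (Cmul (Cmul (Cconj x) (rho i i)) x).
Proof.
  intros Hi. rewrite Re_Csum.
  assert (Hv0 : forall k, k <> i -> vec2 i i x C0 k = C0).
  { intros k H1. unfold vec2. apply Nat.eqb_neq in H1. rewrite H1. auto. }
  assert (Hv1 : vec2 i i x C0 i = x) by (unfold vec2; rewrite Nat.eqb_refl; auto).
  rewrite (rsum_pick d _ i).
  - rewrite Re_Csum, (rsum_pick d _ i).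
    + rewrite Hv1. auto.
    + intros k Hk. rewrite (Hv0 k Hk). destruct (Cconj (vec2 i i x C0 i)), (rho i k); simpl; ring.
    + intros; lia.
  - intros k Hk. rewrite Re_Csum. apply rsum_zero. intros. rewrite (Hv0 k Hk).
    destruct (rho k k0), (vec2 i i x C0 k0); simpl; ring.
  - intros; lia.
Qed.

Lemma density_Inv nbar rho : density (dimD nbar) rho -> Inv nbar rho.
Proof.
  intros (Hs & Hh & Hp & Ht).
  assert (Him : forall i, Im (rho i i) = 0).
  { intros i. pose proof (Hh i i) as E. destruct (rho i i) as [r m]. simpl. injection E. lra. }
  assert (Hre : forall i, 0 <= Re (rho i i)).
  { intros i. destruct (Nat.lt_ge_cases i (dimD nbar)) as [Hi|Hi].
    - pose proof (Hp (vec2 i i Defs.C1 C0)) as P. rewrite quad1 in P by auto.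
      destruct (rho i i) as [r m]. simpl in *. lra.
    - rewrite (Hs i i) by auto. simpl; lra. }
  split; [auto|split; [auto|split; [auto|split]]].
  - intros i j.
    destruct (Nat.lt_ge_cases i (dimD nbar)) as [Hi|Hi]; [destruct (Nat.lt_ge_cases j (dimD nbar)) as [Hj|Hj]|].
    + destruct (Nat.eq_dec i j) as [<-|Hij].
      * rewrite Him. pose proof (Hre i). nra.
      * set (N := Re (rho i j) ^ 2 + Im (rho i j) ^ 2).
        assert (HQ : forall t, 0 <= t ^ 2 * Re (rho i i) - 2 * t * N + N * Re (rho j j)).
        { intros t. pose proof (Hp (vec2 i j (RtoC t) (mkC (- Re (rho i j)) (Im (rho i j))))) as P.
          rewrite quad2 in P by auto. rewrite (Hh j i) in P.
          pose proof (Him i) as Ei. pose proof (Him j) as Ej. unfold N.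
          destruct (rho i i) as [a1 b1], (rho j j) as [a2 b2], (rho i j) as [a3 b3]. simpl in *.
          subst. nra. }
        pose proof (Hre i) as Pi. pose proof (Hre j) as Pj.
        assert (HN : 0 <= N) by (unfold N; nra).
        fold N. destruct (Rle_lt_or_eq_dec 0 (Re (rho i i)) Pi) as [Pi'|Pi'].
        -- pose proof (HQ (N / Re (rho i i))) as Q.
           assert (Q' : 0 <= N * (Re (rho i i) * Re (rho j j) - N)).
           { replace (N * (Re (rho i i) * Re (rho j j) - N)) with
               (Re (rho i i) * ((N / Re (rho i i)) ^ 2 * Re (rho i i) - 2 * (N / Re (rho i i)) * N + N * Re (rho j j))) by (field; lra).
             apply Rmult_le_pos; lra. }
           destruct (Rle_lt_or_eq_dec 0 N HN) as [HN'|HN']; [|rewrite <- HN'; nra].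
           nra.
        -- pose proof (HQ (Re (rho j j) + 1)) as Q. rewrite <- Pi' in *. nra.
    + rewrite (Hs i j) by auto. simpl. pose proof (Hre i). pose proof (Hre j). nra.
    + rewrite (Hs i j) by auto. simpl. pose proof (Hre i). pose proof (Hre j). nra.
  - rewrite <- Re_Csum, Ht. reflexivity.
Qed.

Definition pq nbar (rho : op) := rsum (dimD nbar) (fun n => if Nat.eqb n nbar then 0 else Re (rho n n)).

Lemma nbar_lt_d nbar : (nbar < dimD nbar)%nat.
Proof. unfold dimD; lia. Qed.

Lemma trace_split nbar rho :
  rsum (dimD nbar) (fun n => Re (rho n n)) = Re (rho nbar nbar) + pq nbar rho.
Proof.
  unfold pq.
  rewrite (rsum_ext _ (fun n => Re (rho n n)) (fun n => (if Nat.eqb n nbar then Re (rho n n) else 0) + (if Nat.eqb n nbar then 0 else Re (rho n n)))).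
  2:{ intros k _. destruct (Nat.eqb k nbar); ring. }
  rewrite rsum_plus. rewrite (rsum_pick _ (fun n => if Nat.eqb n nbar then Re (rho n n) else 0) nbar).
  - rewrite Nat.eqb_refl. reflexivity.
  - intros k Hk. destruct (Nat.eqb_spec k nbar); auto; lia.
  - pose proof (nbar_lt_d nbar). intros; lia.
Qed.

Lemma q_nonneg nbar rho : Inv nbar rho -> 0 <= pq nbar rho.
Proof. intros (_ & _ & Hre & _). apply rsum_nonneg. intros k _. destruct (Nat.eqb k nbar); auto; lra. Qed.

Lemma p_le_q nbar rho i : Inv nbar rho -> i <> nbar -> Re (rho i i) <= pq nbar rho.
Proof.
  intros HI Hi. pose proof (q_nonneg nbar rho HI). destruct HI as (Hs & _ & Hre & _).
  destruct (Nat.lt_ge_cases i (dimD nbar)) as [Hd|Hd].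
  - unfold pq. pose proof (rsum_le_term (dimD nbar) (fun n => if Nat.eqb n nbar then 0 else Re (rho n n)) i) as L.
    simpl in L. apply Nat.eqb_neq in Hi. rewrite Hi in L. apply L; auto.
    intros k _. destruct (Nat.eqb k nbar); auto; lra.
  - rewrite (Hs i i) by auto. simpl. lra.
Qed.

Lemma p_le_1 nbar rho i : Inv nbar rho -> Re (rho i i) <= 1.
Proof.
  intros HI. pose proof HI as (Hs & _ & Hre & _ & Ht).
  destruct (Nat.lt_ge_cases i (dimD nbar)) as [Hd|Hd].
  - rewrite <- Ht. apply (rsum_le_term _ (fun n => Re (rho n n))); auto.
  - rewrite (Hs i i) by auto. simpl. lra.
Qed.

Lemma entry_bound nbar rho i j : Inv nbar rho ->
  (Re (rho i j) - Re (proj nbar i j)) ^ 2 <= pq nbar rho /\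
  (Im (rho i j) - Im (proj nbar i j)) ^ 2 <= pq nbar rho.
Proof.
  intros HI. pose proof (q_nonneg nbar rho HI) as Hq.
  pose proof HI as (Hs & Him & Hre & Hcs & Ht).
  unfold proj. destruct (Nat.eqb_spec i nbar) as [->|Hi]; destruct (Nat.eqb_spec j nbar) as [->|Hj]; simpl.
  - rewrite trace_split in Ht. rewrite Him. pose proof (Hre nbar). split; nra.
  - pose proof (Hcs nbar j). pose proof (p_le_q nbar rho j HI Hj). pose proof (p_le_1 nbar rho nbar HI).
    pose proof (Hre nbar). pose proof (Hre j).
    assert (Re (rho nbar nbar) * Re (rho j j) <= pq nbar rho) by nra.
    split; nra.
  - pose proof (Hcs i nbar). pose proof (p_le_q nbar rho i HI Hi). pose proof (p_le_1 nbar rho nbar HI).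
    pose proof (Hre nbar). pose proof (Hre i).
    assert (Re (rho i i) * Re (rho nbar nbar) <= pq nbar rho) by nra.
    split; nra.
  - pose proof (Hcs i j). pose proof (p_le_q nbar rho i HI Hi). pose proof (p_le_1 nbar rho j HI).
    pose proof (Hre j). pose proof (Hre i).
    assert (Re (rho i i) * Re (rho j j) <= pq nbar rho) by nra.
    split; nra.
Qed.

Lemma min_exists (g : nat -> R) (s m : nat) :
  (forall n, (n < m)%nat -> n <> s -> g n < 0) ->
  exists c, 0 < c /\ forall n, (n < m)%nat -> n <> s -> g n <= - c.
Proof.
  induction m; intros H.
  - exists 1. split; [lra|]. intros; lia.
  - destruct IHm as [c [Hc Hc']]. { intros; apply H; lia. }
    destruct (Nat.eq_dec m s) as [->|Hms].
    + exists c. split; auto. intros n Hn Hns. apply Hc'; lia.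
    + exists (Rmin c (- g m)). pose proof (H m ltac:(lia) Hms).
      split. { apply Rmin_pos; lra. }
      intros n Hn Hns. destruct (Nat.eq_dec n m) as [->|Hnm].
      * pose proof (Rmin_r c (- g m)). lra.
      * pose proof (Rmin_l c (- g m)). pose proof (Hc' n ltac:(lia) Hns). lra.
Qed.

Lemma decrease nbar th2 phi f rho c : Inv nbar rho ->
  (forall n, (n < dimD nbar)%nat -> n <> nbar -> Dl nbar th2 f n <= - c) ->
  Vf (dimD nbar) f (Phi nbar th2 phi rho) <= Vf (dimD nbar) f rho - c * pq nbar rho.
Proof.
  intros HI Hc. pose proof HI as (Hs & _ & Hre & _).
  rewrite V_Phi by auto. unfold pq. rewrite <- rsum_scal.
  assert (rsum (dimD nbar) (fun n => Re (rho n n) * Dl nbar th2 f n) <=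
          rsum (dimD nbar) (fun k => - (c * (if Nat.eqb k nbar then 0 else Re (rho k k))))).
  { apply rsum_le. intros k Hk. destruct (Nat.eqb_spec k nbar) as [->|Hne].
    - rewrite Dl_nbar. lra.
    - pose proof (Hc k Hk Hne). pose proof (Hre k). nra. }
  assert (rsum (dimD nbar) (fun k => - (c * (if Nat.eqb k nbar then 0 else Re (rho k k)))) =
          - rsum (dimD nbar) (fun k => c * (if Nat.eqb k nbar then 0 else Re (rho k k)))).
  { transitivity (-1 * rsum (dimD nbar) (fun k => c * (if Nat.eqb k nbar then 0 else Re (rho k k)))); [|ring].
    rewrite <- rsum_scal. apply rsum_ext. intros. ring. }
  lra.
Qed.

Lemma V_ge_q nbar f rho : Inv nbar rho -> f nbar = 0 ->
  (forall n, (n < dimD nbar)%nat -> n <> nbar -> 1 <= f n) ->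
  pq nbar rho <= Vf (dimD nbar) f rho.
Proof.
  intros HI Hf0 Hf1. pose proof HI as (Hs & _ & Hre & _).
  rewrite Vf_eq. unfold pq. apply rsum_le. intros k Hk. destruct (Nat.eqb_spec k nbar) as [->|Hne].
  - rewrite Hf0. lra.
  - pose proof (Hf1 k Hk Hne). pose proof (Hre k). nra.
Qed.

Lemma V_le_q nbar f rho : Inv nbar rho -> f nbar = 0 ->
  Vf (dimD nbar) f rho <= (rsum (dimD nbar) (fun n => Rabs (f n)) + 1) * pq nbar rho.
Proof.
  intros HI Hf0. pose proof HI as (Hs & _ & Hre & _).
  rewrite Vf_eq. unfold pq. rewrite <- rsum_scal. apply rsum_le. intros k Hk.
  destruct (Nat.eqb_spec k nbar) as [->|Hne].
  - rewrite Hf0. lra.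
  - pose proof (rsum_le_term (dimD nbar) (fun n => Rabs (f n)) k (fun n _ => Rabs_pos (f n)) Hk).
    pose proof (Rle_abs (f k)). pose proof (Hre k). simpl in H. nra.
Qed.

Lemma conv_lemma (x : nat -> R) L r V0 : 0 <= r < 1 -> 0 <= V0 ->
  (forall k, (x k - L) ^ 2 <= r ^ k * V0) -> Un_cv x L.
Proof.
  intros Hr HV H eps Heps.
  assert (Hy : 0 < eps ^ 2 / (V0 + 1)) by (apply Rdiv_lt_0_compat; nra).
  destruct (pow_lt_1_zero r ltac:(rewrite Rabs_right; lra) _ Hy) as [N HN].
  exists N. intros k Hk. specialize (HN k Hk). specialize (H k).
  unfold R_dist. pose proof (pow_le r k (proj1 Hr)) as Hrk.
  rewrite Rabs_right in HN by lra.
  assert (r ^ k * V0 < eps ^ 2).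
  { apply (Rmult_lt_compat_r (V0 + 1)) in HN; [|lra].
    unfold Rdiv in HN. rewrite Rmult_assoc, Rinv_l, Rmult_1_r in HN by lra. nra. }
  assert (Habs : Rabs (x k - L) ^ 2 < eps ^ 2) by (rewrite <- (pow2_abs (x k - L)) in H; lra).
  pose proof (Rabs_pos (x k - L)).
  destruct (Rlt_le_dec (Rabs (x k - L)) eps); auto. nra.
Qed.

Theorem theorem1 (nbar : nat) (theta2 phi eta : R) (f : nat -> R)
  (hnbar : (1 <= nbar)%nat)
  (htheta2 : 0 < theta2)
  (hres : forall (n k : nat), (1 <= n <= 4 * nbar + 3)%nat ->
            theta2 <> INR k * PI / sqrt (INR n))
  (heta : 0 < eta < 1)
  (hf : f_spec nbar theta2 eta f) :
  (invariant_sub (dimD nbar) (Mg nbar theta2) /\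
   invariant_sub (dimD nbar) (Me nbar theta2) /\
   invariant_sub (dimD nbar) (Mm nbar theta2 phi)) /\
  (forall rho0 : op, density (dimD nbar) rho0 ->
     forall i j : nat,
       Un_cv (fun k => Re (Nat.iter k (Phi nbar theta2 phi) rho0 i j)) (Re (proj nbar i j)) /\
       Un_cv (fun k => Im (Nat.iter k (Phi nbar theta2 phi) rho0 i j)) (Im (proj nbar i j))) /\
  (forall rho : op, density (dimD nbar) rho -> rho <> proj nbar ->
     Vf (dimD nbar) f (Phi nbar theta2 phi rho) < Vf (dimD nbar) f rho).
Proof.
  set (d := dimD nbar).
  assert (Hf0 : f nbar = 0) by (apply hf).
  assert (Hf1 : forall n, (n < d)%nat -> n <> nbar -> 1 <= f n).
  { intros n Hn Hne. destruct (Nat.lt_ge_cases n nbar).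
    - apply (f_low' nbar theta2 eta f hnbar htheta2 hres heta hf n); auto.
    - apply (f_high' nbar theta2 eta f htheta2 hres heta hf n). unfold d, dimD in Hn. lia. }
  destruct (min_exists (Dl nbar theta2 f) nbar d) as [c [Hc Hc']].
  { intros n Hn Hne. apply (Dl_neg nbar theta2 eta f); auto. unfold d, dimD in Hn. lia. }
  split; [|split].
  - split; [|split].
    + intros m n Hn Hm. destruct (Nat.eq_dec n (pred m)) as [Hnm|Hnm].
      * assert (m = d) by (unfold d, dimD in *; lia). subst m n.
        apply Cext; [|apply Mg_im]. change (Gc nbar theta2 d = 0). apply Gc_d.
      * apply Mg_zero; auto.
    + intros m n Hn Hm. apply Me_zero. lia.
    + intros m n Hn Hm. apply Mm_zero. lia.
  - intros rho0 Hd0 i j.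
    set (F := rsum d (fun n => Rabs (f n)) + 1).
    assert (HF : 0 < F).
    { unfold F. pose proof (rsum_nonneg d (fun n => Rabs (f n)) (fun n _ => Rabs_pos (f n))). lra. }
    set (r := Rmax 0 (1 - c / F)).
    assert (Hr : 0 <= r < 1).
    { unfold r. split; [apply Rmax_l|]. apply Rmax_lub_lt; [lra|].
      assert (0 < c / F) by (apply Rdiv_lt_0_compat; auto). lra. }
    set (rk := fun k => Nat.iter k (Phi nbar theta2 phi) rho0).
    assert (HI : forall k, Inv nbar (rk k)).
    { induction k. - apply density_Inv; auto. - simpl. apply Inv_Phi. apply IHk. }
    assert (HV : forall k, Vf d f (rk k) <= r ^ k * Vf d f rho0).
    { induction k.
      - simpl. lra.
      - change (rk (S k)) with (Phi nbar theta2 phi (rk k)).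
        pose proof (decrease nbar theta2 phi f (rk k) c (HI k) Hc') as H.
        pose proof (V_le_q nbar f (rk k) (HI k) Hf0) as H0. fold d F in H0.
        pose proof (V_ge_q nbar f (rk k) (HI k) Hf0 Hf1) as H1. pose proof (q_nonneg nbar (rk k) (HI k)) as H2.
        fold d in H, H1.
        assert (Vf d f (Phi nbar theta2 phi (rk k)) <= r * Vf d f (rk k)).
        { assert (c * pq nbar (rk k) >= (c / F) * Vf d f (rk k)).
          { unfold Rdiv. replace (c * / F * Vf d f (rk k)) with (c * (Vf d f (rk k) / F)) by (field; lra).
            apply Rle_ge, Rmult_le_compat_l; [lra|]. apply Rmult_le_reg_r with F; auto.
            unfold Rdiv. rewrite Rmult_assoc, Rinv_l, Rmult_1_r by lra. nra. }
          assert ((1 - c / F) * Vf d f (rk k) <= r * Vf d f (rk k)).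
          { apply Rmult_le_compat_r; [lra|apply Rmax_r]. }
          fold d in H. nra. }
        simpl pow. pose proof (Rmult_le_compat_l r _ _ (proj1 Hr) IHk). lra. }
    assert (HV0 : 0 <= Vf d f rho0).
    { pose proof (V_ge_q nbar f (rk O) (HI O) Hf0 Hf1) as A1. pose proof (q_nonneg nbar (rk O) (HI O)) as A2.
      change (rk O) with rho0 in A1, A2. fold d in A1. lra. }
    assert (HB : forall k, pq nbar (rk k) <= r ^ k * Vf d f rho0).
    { intros k. pose proof (V_ge_q nbar f (rk k) (HI k) Hf0 Hf1) as A1. pose proof (HV k). fold d in A1. lra. }
    split.
    + apply (conv_lemma _ _ r (Vf d f rho0)); auto. intros k.
      destruct (entry_bound nbar (rk k) i j (HI k)). pose proof (HB k). unfold rk in *. lra.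
    + apply (conv_lemma _ _ r (Vf d f rho0)); auto. intros k.
      destruct (entry_bound nbar (rk k) i j (HI k)). pose proof (HB k). unfold rk in *. lra.
  - intros rho Hd Hne.
    pose proof (density_Inv nbar rho Hd) as HI.
    pose proof (decrease nbar theta2 phi f rho c HI Hc').
    assert (Hq : 0 < pq nbar rho).
    { destruct (Rle_lt_dec (pq nbar rho) 0) as [Hle|Hlt]; auto. exfalso. apply Hne.
      pose proof (q_nonneg nbar rho HI) as Hq0.
      pose proof HI as (Hs & Him & Hre & Hcs & Ht).
      assert (Hp0 : forall n, n <> nbar -> Re (rho n n) = 0).
      { intros n Hn. pose proof (p_le_q nbar rho n HI Hn). pose proof (Hre n). lra. }
      rewrite trace_split in Ht.
      apply functional_extensionality; intros a. apply functional_extensionality; intros b.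
      unfold proj. destruct (Nat.eqb_spec a nbar) as [->|Ha]; destruct (Nat.eqb_spec b nbar) as [->|Hb]; simpl.
      - apply Cext; simpl; [lra|apply Him].
      - pose proof (Hcs nbar b). rewrite (Hp0 b Hb) in H0.
        apply Cext; simpl; nra.
      - pose proof (Hcs a nbar). rewrite (Hp0 a Ha) in H0.
        apply Cext; simpl; nra.
      - pose proof (Hcs a b). rewrite (Hp0 a Ha) in H0.
        apply Cext; simpl; nra. }
    fold d in H |- *. nra.
Qed.
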